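(* Let $R$ be a commutative ring with identity, $M$ an $R$-module and $a\in R$. Then the $R$-module $M/a\Gamma_{a}(M)$ is $a$-reduced.
   Context: $\Gamma_{a}(M)=\{m\in M \mid a^{k}m=0 \text{ for some } k\in\mathbb{Z}^{+}\}$ and $a\Gamma_{a}(M)=\{am \mid m\in \Gamma_a(M)\}$, a submodule of $M$. An $R$-module $N$ is $a$-reduced if for all $n\in N$, $a^{2}n=0$ implies $an=0$. *)

(* Defs.v *)
From mathcomp Require Import all_boot all_algebra.
Set Implicit Arguments. Unset Strict Implicit. Unset Printing Implicit Defensive.
Import GRing.Theory.
Local Open Scope ring_scope.

Definition Gamma (R : comPzRingType) (M : lmodType R) (a : R) (m : M) : Prop :=
  exists k : nat, (0 < k)%N /\ a ^+ k *: m = 0.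

Definition aGamma (R : comPzRingType) (M : lmodType R) (a : R) (x : M) : Prop :=
  exists m : M, Gamma a m /\ x = a *: m.

Definition a_reduced (R : comPzRingType) (N : lmodType R) (a : R) : Prop :=
  forall n : N, a ^+ 2 *: n = 0 -> a *: n = 0.

(* Main.v *)
Require Import Defs.
From mathcomp Require Import all_boot all_algebra.
Local Open Scope ring_scope.
Import GRing.Theory.

Theorem mainTheorem4 (R : comPzRingType) (M : lmodType R) (a : R)
  (Q : lmodType R) (f : {linear M -> Q}) :
  (forall q : Q, exists m : M, f m = q) ->
  (forall m : M, f m = 0 <-> aGamma a m) ->
  a_reduced Q a.
Proof.
move=> surj ker q; case: (surj q) => m <-.
rewrite -!linearZ => /ker [m' [[k [k0 hk]] e]].
apply/ker; exists m; split => //.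
case: k k0 hk => [//|k] _ hk.
exists k.+2; split => //.
have -> : a ^+ k.+2 = a ^+ k * a ^+ 2 by rewrite -exprD addn2.
by rewrite -scalerA e scalerA -exprSr.
Qed.
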